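(* Let $(M,\Sigma)$ be a measurable space, $r\ge1$, and $\mu_1,\dots,\mu_r$ non-atomic countably additive finite measures on $\Sigma$; put $\mu=\frac1r\sum_{i=1}^r\mu_i$. For $k\ge1$ let $t(k)=k\bmod r$ if this is nonzero and $t(k)=r$ otherwise. Let $(H_k)_{k\ge1}$ be a sequence of measurable sets such that for every $k$: $H_k\subseteq M\setminus\bigcup_{i=1}^{k-1}H_i$, $H_k$ admits a strong solution (a partition $H_k=F_1\sqcup\dots\sqcup F_r$ with $\mu_i(F_i)\ge\mu_i(F_j)$ for all $i,j$), and $\mu_{t(k)}(H_k)\ge 2^{-(r-1)}\mu_{t(k)}\bigl(M\setminus\bigcup_{i=1}^{k-1}H_i\bigr)$. For $s\ge0$ let $M_s=M\setminus\bigcup_{i=1}^{sr}H_i$. Then for every $s\ge0$, $$\mu(M_s)\le\Bigl(\frac{2^{r-1}-1}{2^{r-1}}\Bigr)^{s}\mu(M).$$ *)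

(* Defs.v *)
From HB Require Import structures.
From mathcomp Require Import all_boot all_order all_algebra.
From mathcomp Require Import all_classical all_reals all_analysis.
Set Implicit Arguments. Unset Strict Implicit. Unset Printing Implicit Defensive.
Import Order.TTheory GRing.Theory Num.Theory.
Local Open Scope classical_set_scope.
Local Open Scope ring_scope.

Definition prefix_union (T : Type) (H : nat -> set T) (k : nat) : set T :=
  \big[setU/set0]_(1 <= i < k) H i.

Definition tidx (r k : nat) : nat := if (k %% r != 0)%N then (k %% r)%N else r.

Definition nonatomic d (T : measurableType d) (R : realType)
  (m : {measure set T -> \bar R}) : Prop :=
  forall A, measurable A -> (0 < m A)%E ->
    exists2 B, measurable B /\ B `<=` A & (0 < m B)%E /\ (m B < m A)%E.

Definition strong_solution d (T : measurableType d) (R : realType) (r : nat)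
  (mu : nat -> {measure set T -> \bar R}) (H : set T) : Prop :=
  exists F : nat -> set T,
    [/\ forall i, (1 <= i <= r)%N -> measurable (F i),
        forall i j, (1 <= i <= r)%N -> (1 <= j <= r)%N -> i <> j -> F i `&` F j = set0,
        H = \big[setU/set0]_(1 <= i < r.+1) F i &
        forall i j, (1 <= i <= r)%N -> (1 <= j <= r)%N -> (mu i (F j) <= mu i (F i))%E].

(* Main.v *)
Require Import Defs.
From HB Require Import structures.
From mathcomp Require Import all_boot all_order all_algebra.
From mathcomp Require Import all_classical all_reals all_analysis.
Import Order.TTheory GRing.Theory Num.Theory.
Local Open Scope classical_set_scope.
Local Open Scope ring_scope.

Lemma pu_rec (T : Type) (H : nat -> set T) k : (1 <= k)%N ->
  prefix_union H k.+1 = prefix_union H k `|` H k.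
Proof. by move=> hk; rewrite /prefix_union big_nat_recr. Qed.

Lemma pu_meas d (T : measurableType d) (H : nat -> set T) :
  (forall k, (1 <= k)%N -> measurable (H k)) ->
  forall k, measurable (prefix_union H k).
Proof.
move=> hm; elim=> [|k IH]; first by rewrite /prefix_union big_geq.
case: k IH => [|k] IH; first by rewrite /prefix_union big_geq.
by rewrite pu_rec //; apply: measurableU => //; apply: hm.
Qed.

Lemma tidx_block r s j : (1 <= j <= r)%N -> tidx r (s * r + j) = j.
Proof.
move=> /andP[j1 jr]; rewrite /tidx.
rewrite modnMDl.
case: (ltnP j r) => hj.
  by rewrite modn_small // ; case: j j1 {jr hj}.
have -> : j = r by apply/eqP; rewrite eqn_leq jr hj.
by rewrite modnn.
Qed.

Theorem corollary2 (d : measure_display) (T : measurableType d) (R : realType)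
  (r : nat) (hr : (1 <= r)%N) (mu : nat -> {measure set T -> \bar R})
  (hfin : forall i, (1 <= i <= r)%N -> (mu i setT < +oo)%E)
  (hna : forall i, (1 <= i <= r)%N -> nonatomic (mu i))
  (H : nat -> set T)
  (hHm : forall k, (1 <= k)%N -> measurable (H k))
  (hHsub : forall k, (1 <= k)%N -> H k `<=` setT `\` prefix_union H k)
  (hHsol : forall k, (1 <= k)%N -> strong_solution r mu (H k))
  (hHbig : forall k, (1 <= k)%N ->
     (((2 ^+ (r - 1))^-1)%:E * mu (tidx r k) (setT `\` prefix_union H k)
        <= mu (tidx r k) (H k))%E) :
  forall s : nat,
    ((r%:R^-1)%:E * \sum_(1 <= i < r.+1) mu i (setT `\` prefix_union H (s * r).+1)
      <= (((2 ^+ (r - 1) - 1) / 2 ^+ (r - 1)) ^+ s)%:E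
         * ((r%:R^-1)%:E * \sum_(1 <= i < r.+1) mu i setT))%E.
Proof.
set Y := fun k => setT `\` prefix_union H k.
have Ym k : measurable (Y k) by apply: measurableD => //; apply: pu_meas.
have fn i A : (1 <= i <= r)%N -> measurable A -> mu i A \is a fin_num.
  move=> hi mA; rewrite ge0_fin_numE; last exact: measure_ge0.
  apply: le_lt_trans (hfin i hi); apply: le_measure; rewrite ?inE //.
have fin i A : (1 <= i <= r)%N -> measurable A -> mu i A = (fine (mu i A))%:E.
  by move=> hi mA; rewrite fineK // fn.
set f := fun i k => fine (mu i (Y k)).
have Yrec k : (1 <= k)%N -> Y k = Y k.+1 `|` H k.
  move=> hk; rewrite /Y pu_rec // -setDDl setDKU //; exact: hHsub.
have add i k : (1 <= i <= r)%N -> (1 <= k)%N ->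
    f i k = f i k.+1 + fine (mu i (H k)).
  move=> hi hk.
  have dj : Y k.+1 `&` H k = set0 by rewrite /Y pu_rec // -setDDl setIC setDIK.
  have := measureU (mu i) (Ym k.+1) (hHm k hk) dj; rewrite -Yrec // => e.
  by rewrite /f e fineD //; apply: fn => //; try apply: Ym; apply: hHm.
have hge0 i A : 0 <= fine (mu i A) by apply: fine_ge0; apply: measure_ge0.
have mono i k m : (1 <= i <= r)%N -> (1 <= k)%N -> (k <= m)%N -> f i m <= f i k.
  move=> hi hk; elim: m => [|m IH]; first by rewrite leqn0 => /eqP ->.
  rewrite leq_eqVlt => /orP[/eqP -> //|]; rewrite ltnS => km.
  apply: le_trans (IH km); rewrite (add i m) //; last exact: leq_trans km.
  by rewrite lerDl.
set c := (2 ^+ (r - 1) - 1) / 2 ^+ (r - 1) : R.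
have p2 : (0 : R) < 2 ^+ (r - 1) by apply: exprn_gt0.
have p1 : (1 : R) <= 2 ^+ (r - 1) by rewrite exprn_ege1 // ler1n.
have c0 : 0 <= c by rewrite /c divr_ge0 // ?subr_ge0 // ltW.
have step k : (1 <= k)%N -> f (tidx r k) k.+1 <= c * f (tidx r k) k.
  move=> hk.
  have hi : (1 <= tidx r k <= r)%N.
    rewrite /tidx; case: ifP => [h|_]; last by rewrite hr leqnn.
    by rewrite lt0n h /= ltnW // ltn_mod.
  have := hHbig k hk; rewrite (fin _ (H k)) ?hHm //.
  rewrite (fin _ (setT `\` prefix_union H k)) //; last exact: (Ym k).
  rewrite -EFinM lee_fin.
  have -> : fine (mu (tidx r k) (setT `\` prefix_union H k)) = f (tidx r k) k by [].
  rewrite (add _ k) // => hb.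
  have e : c = 1 - (2 ^+ (r - 1))^-1.
    by rewrite /c mulrBl divff ?mul1r // lt0r_neq0.
  rewrite e mulrBl mul1r.
  set a := f _ k.+1; set b := fine _ in hb *.
  by rewrite -addrA lerDl subr_ge0.
  exact: hHm.
have block s i : (1 <= i <= r)%N -> f i (s.+1 * r).+1 <= c * f i (s * r).+1.
  move=> hi; case/andP: (hi) => i1 ir.
  have k1 : (1 <= s * r + i)%N by rewrite (leq_trans i1) // leq_addl.
  apply: (@le_trans _ _ (f i (s * r + i).+1)).
    by apply: mono => //; rewrite ltnS mulSnr leq_add2l.
  have := step _ k1; rewrite tidx_block // => h; apply: le_trans h _.
  apply: ler_wpM2l => //; apply: mono => //; by rewrite -addn1 leq_add2l.
set S := fun s => \sum_(1 <= i < r.+1) f i (s * r).+1.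
have Sfin s : \sum_(1 <= i < r.+1) mu i (Y (s * r).+1) = (S s)%:E.
  rewrite /S big_nat_cond [X in _ = X%:E]big_nat_cond.
  rewrite (@EFin_sum_fine _ _ _ _ (fun i => mu i (Y (s * r).+1))) //.
  by move=> i /andP[/andP[i1 ir] _]; apply: fn; [rewrite i1 -ltnS | apply: Ym].
have Srec s : S s.+1 <= c * S s.
  rewrite /S mulr_sumr big_nat_cond [X in _ <= X]big_nat_cond.
  apply: ler_sum => i /andP[/andP[i1 ir] _].
  by apply: block; rewrite i1 -ltnS.
have Sind s : S s <= c ^+ s * S 0.
  elim: s => [|s IH]; first by rewrite expr0 mul1r.
  apply: le_trans (Srec s) _; rewrite exprS -mulrA; exact: ler_wpM2l.
move=> s; rewrite Sfin.
have -> : \sum_(1 <= i < r.+1) mu i setT = (S 0)%:E.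
  rewrite -(Sfin 0); apply: eq_bigr => i _; congr (mu i _).
  by rewrite /Y /prefix_union big_geq // setD0.
rewrite -!EFinM lee_fin -/c mulrCA; apply: ler_wpM2l; last exact: Sind.
by rewrite invr_ge0.
Qed.
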